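(* In the setting below, $\kappa_0=\rho$, and for every $\alpha\in\mathbb{N}^N$ with $|\alpha|\ge1$, \[ |\kappa_\alpha|\le(|\alpha|+1)^{|\alpha|}\lambda^{|\alpha|}\rho^{|V(\alpha)|}. \]
   Context: Let $n\ge1$, $\lambda\ge0$, $\rho\in(0,1)$, $v\in\{0,1\}^n$ with i.i.d. $\mathrm{Bernoulli}(\rho)$ entries, $N=n(n+1)/2$ indexed by pairs $(i,j)$ with $1\le i\le j\le n$, $X_{ij}=\lambda v_iv_j$, and $x=v_1$. An index $\alpha=(\alpha_{ij})_{i\le j}\in\mathbb{N}^N$ is viewed as a multigraph on vertex set $[n]$ (self-loops allowed) with $\alpha_{ij}$ edges between $i$ and $j$; $|\alpha|$ is its number of edges and $V(\alpha)$ the set of vertices spanned by its edges. $\kappa_\alpha$ is defined recursively by $\kappa_\alpha=\mathbb{E}[xX^\alpha]-\sum_{0\le\beta\lneq\alpha}\kappa_\beta\binom{\alpha}{\beta}\mathbb{E}[X^{\alpha-\beta}]$, with multi-index notation $X^\alpha=\prod X_{ij}^{\alpha_{ij}}$, $\binom{\alpha}{\beta}=\prod\binom{\alpha_{ij}}{\beta_{ij}}$, $\beta\le\alpha$ entrywise, $\beta\lneq\alpha$ meaning $\beta\le\alpha$, $\beta\ne\alpha$. *)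

(* Defs.v *)
From HB Require Import structures.
From mathcomp Require Import all_boot all_order all_algebra.
From mathcomp Require Import reals.
Set Implicit Arguments. Unset Strict Implicit. Unset Printing Implicit Defensive.
Import Order.TTheory GRing.Theory Num.Theory.
Local Open Scope ring_scope.

Section Kappa.
Variables (R : realType) (n : nat) (lambda rho : R).

(* Index set {(i,j) : 1 <= i <= j <= n} (0-based here). *)
Definition Pair := {p : 'I_n * 'I_n | (p.1 <= p.2)%N}.
Definition pfst (p : Pair) : 'I_n := (val p).1.
Definition psnd (p : Pair) : 'I_n := (val p).2.

(* Multi-indices alpha in N^N, viewed as multigraphs. *)
Definition mindex := {ffun Pair -> nat}.

Definition msize (a : mindex) : nat := (\sum_(p : Pair) a p)%N.
Definition Vset (a : mindex) : {set 'I_n} :=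
  [set i : 'I_n | [exists p : Pair, (a p != 0%N) && ((pfst p == i) || (psnd p == i))]].

Definition mle (b a : mindex) : bool := [forall p, (b p <= a p)%N].
Definition msub (a b : mindex) : mindex := [ffun p => (a p - b p)%N].
Definition mbinom (a b : mindex) : nat := (\prod_(p : Pair) 'C(a p, b p))%N.

(* Sample space: v in {0,1}^n with i.i.d. Bernoulli(rho) entries *)
Definition outcome := {ffun 'I_n -> bool}.
Definition weight (v : outcome) : R :=
  \prod_(i : 'I_n) (if v i then rho else 1 - rho).
Definition Expect (f : outcome -> R) : R := \sum_(v : outcome) weight v * f v.

Definition Xij (v : outcome) (p : Pair) : R :=
  lambda * ((v (pfst p))%:R * (v (psnd p))%:R).
Definition Xpow (a : mindex) (v : outcome) : R := \prod_(p : Pair) Xij v p ^+ a p.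

Definition strict_lowers (a : mindex) : seq mindex :=
  [seq b <- [seq [ffun p => nat_of_ord (c p)] | c : {ffun Pair -> 'I_(msize a).+1} <- enum {ffun Pair -> 'I_(msize a).+1}]
     | mle b a && (b != a)].

(* x = v_1, given as the index i0 *)
Variable i0 : 'I_n.
Definition xv (v : outcome) : R := (v i0)%:R.

(* recursion with fuel; kappa_alpha uses fuel |alpha|+1, which suffices since
   |beta| < |alpha| for beta < alpha *)
Fixpoint kap (k : nat) (a : mindex) : R :=
  match k with
  | 0 => 0
  | k'.+1 => Expect (fun v => xv v * Xpow a v)
             - \sum_(b <- strict_lowers a)
                 kap k' b * (mbinom a b)%:R * Expect (Xpow (msub a b))
  end.

Definition kappa (a : mindex) : R := kap (msize a).+1 a.

End Kappa.

(* Main.v *)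
Require Import Defs.
From HB Require Import structures.
From mathcomp Require Import all_boot all_order all_algebra.
From mathcomp Require Import reals ring.
Import Order.TTheory GRing.Theory Num.Theory.
Set Implicit Arguments. Unset Strict Implicit. Unset Printing Implicit Defensive.

Lemma msize_ge n (a : mindex n) p : (a p <= msize a)%N.
Proof. by rewrite /msize (bigD1 p) //= leq_addr. Qed.

Lemma comb n (a : mindex n) :
  (1 + \sum_(b <- strict_lowers a) mbinom a b * (msize a) ^ msize b
     <= (msize a).+1 ^ msize a)%N.
Proof.
set m := msize a.
pose T := {ffun Pair n -> 'I_m.+1}.
pose g (c : T) : mindex n := [ffun p => nat_of_ord (c p)].
pose h' (c : T) := (\prod_(p : Pair n) ('C(a p, c p) * m ^ (c p)))%N.
pose ca : T := [ffun p => inord (a p)].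
have gca : g ca = a.
  by apply/ffunP => p; rewrite !ffunE inordK // ltnS msize_ge.
have hh : forall c, (mbinom a (g c) * m ^ msize (g c))%N = h' c.
  move=> c; rewrite /h' big_split /= /mbinom /msize expn_sum.
  by congr (_ * _)%N; apply: eq_bigr => p _; rewrite ffunE.
have tot : (\sum_(c : T) h' c = m.+1 ^ m)%N.
  rewrite /h' -(@bigA_distr_bigA _ _ _ muln addn _ _ (fun p (j : 'I_m.+1) => 'C(a p, j) * m ^ j)%N).
  rewrite [in RHS]/m /msize expn_sum.
  rewrite -/(msize a) -/m.
  transitivity (\prod_p (\sum_(j < m.+1) 'C(a p, j) * m ^ j))%N; first by [].
  apply: eq_big => // p _.
  rewrite -[m.+1 ^ _]/((1 + m) ^ a p)%N expnDn.
  rewrite (big_ord_widen _ (fun i => 'C(a p, i) * (1 ^ (a p - i) * m ^ i))%N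
     (_ : (a p).+1 <= m.+1)%N); last by rewrite ltnS msize_ge.
  change (\sum_(j < m.+1) 'C(a p, j) * m ^ j = \sum_(i < m.+1 | i < (a p).+1) 'C(a p, i) * (1 ^ (a p - i) * m ^ i))%N.
  rewrite [RHS]big_mkcond; apply: eq_bigr => i _.
  by case: ifP => hi; rewrite ?exp1n ?mul1n // bin_small // ltnNge -ltnS hi.
have hca : h' ca = (m ^ m)%N.
  rewrite -hh gca /mbinom big1 ?mul1n // => p _; exact: binn.
have le1 : (\sum_(b <- strict_lowers a) mbinom a b * m ^ msize b
            <= \sum_(c <- enum T | c != ca) h' c)%N.
  rewrite /strict_lowers big_filter big_map big_mkcond [X in (_ <= X)%N]big_mkcond.
  apply: leq_sum => c _.
  case: ifP => // /andP [_ hne]; rewrite hh.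
  case: ifP => // /eqP ec; move: hne; rewrite ec.
  by rewrite -[X in X != _]/(g ca) gca eqxx.
have le2 : (\sum_(c <- enum T | c != ca) h' c + m ^ m = m.+1 ^ m)%N.
  by rewrite -tot (bigD1 ca) //= addnC -hca; congr (_ + _)%N; rewrite big_enum_cond.
have m1 : (1 <= m ^ m)%N.
  by rewrite expn_gt0; case: posnP => // ->.
by rewrite -le2 addnC leq_add.
Qed.


Local Open Scope ring_scope.

Lemma msize_sub n (a b : mindex n) : mle b a -> (msize b + msize (msub a b) = msize a)%N.
Proof.
move=> /forallP h; rewrite /msize -big_split; apply: eq_bigr => p _.
by rewrite /= ffunE subnKC.
Qed.

Lemma Vset_sub n (a b : mindex n) : mle b a ->
  (#|Vset a| <= #|Vset b| + #|Vset (msub a b)|)%N.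
Proof.
move=> h; apply: leq_trans (leq_card_setU _ _).
apply: subset_leq_card; apply/subsetP => i; rewrite !inE => /existsP [p /andP [ap e]].
case bp: (b p == 0)%N.
  apply/orP; right; apply/existsP; exists p; rewrite e andbT ffunE.
  by rewrite (eqP bp) subn0.
by apply/orP; left; apply/existsP; exists p; rewrite e bp.
Qed.

Lemma msize_lt n (a b : mindex n) : mle b a -> b != a -> (msize b < msize a)%N.
Proof.
move=> /forallP h hne.
case: (pickP (fun p => b p != a p)) => [p hp | hn]; last first.
  have eba : b = a by apply/ffunP => p; apply/eqP; move/negbFE: (hn p).
  by rewrite eba eqxx in hne.
have lt : (b p < a p)%N by rewrite ltn_neqAle hp h.
rewrite /msize (bigD1 p) // [X in (_ < X)%N](bigD1 p) //.
by rewrite -addSn leq_add // leq_sum // => q _.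
Qed.

Section R1.
Variables (R : realType) (n : nat) (lambda rho : R).
Hypotheses (hl : 0 <= lambda) (hr0 : 0 < rho) (hr1 : rho < 1).

Lemma weight_ge0 (v : outcome n) : 0 <= weight rho v.
Proof.
apply: prodr_ge0 => i _; case: (v i); first exact: ltW.
by rewrite subr_ge0 ltW.
Qed.

Lemma Expect_le (f g : outcome n -> R) :
  (forall v, f v <= g v) -> Expect rho f <= Expect rho g.
Proof. by move=> h; apply: ler_sum => v _; apply: ler_wpM2l; [exact: weight_ge0|]. Qed.

Lemma Expect_ge0 (f : outcome n -> R) : (forall v, 0 <= f v) -> 0 <= Expect rho f.
Proof. by move=> h; apply: sumr_ge0 => v _; apply: mulr_ge0 => //; exact: weight_ge0. Qed.

Lemma Expect_scale c (f : outcome n -> R) :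
  Expect rho (fun v => c * f v) = c * Expect rho f.
Proof. by rewrite /Expect mulr_sumr; apply: eq_bigr => v _; rewrite mulrCA. Qed.

Definition ind (S : {set 'I_n}) (v : outcome n) : R :=
  \prod_i (if i \in S then (v i)%:R else 1).

Lemma ind_ge0 S (v : outcome n) : 0 <= ind S v.
Proof. by apply: prodr_ge0 => i _; case: ifP => // _; exact: ler0n. Qed.

Lemma Expect_ind S : Expect rho (ind S) = rho ^+ #|S|.
Proof.
rewrite /Expect /weight /ind.
transitivity (\sum_(v : outcome n) \prod_i
   ((if v i then rho else 1 - rho) * (if i \in S then (v i)%:R else 1))).
  by apply: eq_bigr => v _; rewrite big_split.
rewrite -(bigA_distr_bigA (fun i (b : bool) =>
   (if b then rho else 1 - rho) * (if i \in S then b%:R else 1))).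
rewrite -prodr_const [RHS]big_mkcond.
change (\prod_i \sum_(b : bool)
   ((if b then rho else 1 - rho) * (if i \in S then b%:R else 1)) =
   \prod_i (if i \in S then rho else 1)).
apply: eq_bigr => i _.
rewrite big_bool /=; case: ifP => _; rewrite ?mulr1 ?mulr0 ?addr0 //.
by rewrite addrC subrK.
Qed.


Lemma Xij_ge0 (v : outcome n) p : 0 <= Xij lambda v p.
Proof. by rewrite /Xij; case: (v _); case: (v _); rewrite /= ?(mulr1, mulr0, mul1r, mul0r). Qed.

Lemma Xij_le (v : outcome n) p : Xij lambda v p <= lambda.
Proof. by rewrite /Xij; case: (v _); case: (v _); rewrite /= ?(mulr1, mulr0, mul1r, mul0r). Qed.

Lemma Xpow_ge0 (a : mindex n) (v : outcome n) : 0 <= Xpow lambda a v.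
Proof. by apply: prodr_ge0 => p _; apply: exprn_ge0; exact: Xij_ge0. Qed.

Lemma Xpow_le (a : mindex n) (v : outcome n) :
  Xpow lambda a v <= lambda ^+ msize a * ind (Vset a) v.
Proof.
case H: [forall i in Vset a, v i].
  have -> : ind (Vset a) v = 1.
    rewrite /ind big1 // => i _; case: ifP => // iV.
    by move/forall_inP: H => /(_ i iV) ->.
  rewrite mulr1 /msize -prodrXr; apply: ler_prod => p _.
  rewrite exprn_ge0 ?Xij_ge0 //=.
  by apply: lerXn2r; rewrite ?nnegrE ?Xij_ge0 ?Xij_le.
move/negbT/forall_inPn: H => [i iV nv].
rewrite inE in iV; case/existsP: iV => p /andP [ap eq].
have -> : Xpow lambda a v = 0.
  rewrite /Xpow (bigD1 p) //=.
  have -> : Xij lambda v p = 0.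
    by rewrite /Xij; case/orP: eq => /eqP ->; rewrite (negbTE nv) /= ?(mulr0, mul0r).
  by rewrite expr0n (negbTE ap) mul0r.
by apply: mulr_ge0; [exact: exprn_ge0|exact: ind_ge0].
Qed.

Lemma EX_bound (a : mindex n) :
  0 <= Expect rho (Xpow lambda a) <= lambda ^+ msize a * rho ^+ #|Vset a|.
Proof.
apply/andP; split; first by apply: Expect_ge0 => v; exact: Xpow_ge0.
rewrite -Expect_ind -Expect_scale; apply: Expect_le => v; exact: Xpow_le.
Qed.

Lemma ExX_bound (i0 : 'I_n) (a : mindex n) :
  `|Expect rho (fun v => xv R i0 v * Xpow lambda a v)| <= lambda ^+ msize a * rho ^+ #|Vset a|.
Proof.
have h : forall v : outcome n, 0 <= xv R i0 v * Xpow lambda a v <= Xpow lambda a v.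
  move=> v; rewrite /xv; case: (v i0); rewrite /= ?mul1r ?mul0r ?lexx ?Xpow_ge0 //.
rewrite ger0_norm; last by apply: Expect_ge0 => v; case/andP: (h v).
apply: le_trans (proj2 (andP (EX_bound a))).
by apply: Expect_le => v; case/andP: (h v).
Qed.


Lemma rearr (x l1 r1 y l2 r2 : R) :
  x * l1 * r1 * y * (l2 * r2) = y * x * (l1 * l2) * (r1 * r2).
Proof. ring. Qed.

Lemma kap_bound (i0 : 'I_n) k (a : mindex n) :
  `|kap lambda rho i0 k a| <=
     ((msize a).+1)%:R ^+ msize a * lambda ^+ msize a * rho ^+ #|Vset a|.
Proof.
have hr : 0 <= rho := ltW hr0.
elim: k a => [|k IH] a.
  by rewrite normr0; apply: mulr_ge0; [apply: mulr_ge0|]; apply: exprn_ge0.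
have -> : kap lambda rho i0 k.+1 a = Expect rho (fun v => xv R i0 v * Xpow lambda a v)
   - \sum_(b <- strict_lowers a)
       kap lambda rho i0 k b * (mbinom a b)%:R * Expect rho (Xpow lambda (msub a b)) by [].
set m := msize a; set C := lambda ^+ m * rho ^+ #|Vset a|.
have hC : 0 <= C by apply: mulr_ge0; apply: exprn_ge0.
have hterm : forall b, b \in strict_lowers a ->
   `|kap lambda rho i0 k b * (mbinom a b)%:R * Expect rho (Xpow lambda (msub a b))|
     <= (mbinom a b * m ^ msize b)%:R * C.
  move=> b; rewrite mem_filter => /andP [/andP [hle hne] _].
  have [E0 E1] := andP (EX_bound (msub a b)).
  rewrite !normrM (ger0_norm (ler0n _ _)) (ger0_norm E0).
  set mb := msize b; set mc := msize (msub a b).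
  apply: le_trans (_ : ((mb.+1)%:R ^+ mb * lambda ^+ mb * rho ^+ #|Vset b|) *
      (mbinom a b)%:R * (lambda ^+ mc * rho ^+ #|Vset (msub a b)|) <= _).
    apply: ler_pM; [by apply: mulr_ge0|done| |done].
    by apply: ler_pM.
  have -> : (mb.+1)%:R ^+ mb * lambda ^+ mb * rho ^+ #|Vset b| * (mbinom a b)%:R *
      (lambda ^+ mc * rho ^+ #|Vset (msub a b)|) =
      (mbinom a b)%:R * (mb.+1)%:R ^+ mb * (lambda ^+ mb * lambda ^+ mc) *
      (rho ^+ #|Vset b| * rho ^+ #|Vset (msub a b)|) by apply: rearr.
  rewrite -!exprD /mb /mc msize_sub // -/m /C natrM natrX -!mulrA.
  apply: ler_wpM2l; first exact: ler0n.
  apply: ler_pM; [exact: exprn_ge0|by apply: mulr_ge0; apply: exprn_ge0| |].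
    rewrite -!natrX ler_nat.
    have lt := msize_lt hle hne.
    by case: (posnP (msize b)) => [->|pos]; rewrite ?expn0 // leq_exp2r.
  apply: ler_wpM2l; first exact: exprn_ge0.
  by apply: ler_wiXn2l => //; [exact: ltW| exact: Vset_sub].
apply: le_trans (ler_normB _ _) _.
apply: le_trans (lerD (ExX_bound i0 a) (ler_norm_sum _ _ _)) _.
rewrite -/m -/C.
apply: le_trans (lerD (lexx C) (_ : _ <= \sum_(b <- strict_lowers a)
     (mbinom a b * m ^ msize b)%:R * C)) _.
  by rewrite big_seq [X in _ <= X]big_seq; apply: ler_sum => b hb; apply: hterm.
rewrite -mulr_suml -natr_sum -[X in X + _]mul1r -mulrDl.
rewrite -natrX -mulrA -/C; apply: ler_wpM2r => //.
by rewrite -[1]/(1%:R) -natrD ler_nat; exact: comb.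
Qed.

End R1.


Theorem mainTheorem6 (R : realType) (n : nat) (hn : (0 < n)%N)
  (lambda rho : R) (hl : 0 <= lambda) (hr0 : 0 < rho) (hr1 : rho < 1) :
  kappa lambda rho (Ordinal hn) [ffun _ => 0%N] = rho /\
  forall a : mindex n, (1 <= msize a)%N ->
    `|kappa lambda rho (Ordinal hn) a|
      <= ((msize a).+1)%:R ^+ msize a * lambda ^+ msize a * rho ^+ #|Vset a|.
Proof.
split; last first.
  by move=> a _; rewrite /kappa; apply: kap_bound.
set z : mindex n := [ffun _ => 0%N].
set i0 := Ordinal hn.
have mz : msize z = 0%N by rewrite /msize big1 // => p _; rewrite ffunE.
rewrite /kappa.
have -> : kap lambda rho i0 (msize z).+1 z = Expect rho (fun v => xv R i0 v * Xpow lambda z v)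
   - \sum_(b <- strict_lowers z)
       kap lambda rho i0 (msize z) b * (mbinom z b)%:R * Expect rho (Xpow lambda (msub z b)) by [].
rewrite mz big1 ?subr0; last by move=> b _; rewrite !mul0r.
have -> : Expect rho (fun v => xv R i0 v * Xpow lambda z v) = Expect rho (@ind R n [set i0]).
  apply: eq_bigr => v _; congr (_ * _).
  rewrite /Xpow big1 ?mulr1; last by move=> p _; rewrite ffunE expr0.
  by rewrite /ind -big_mkcond big_set1.
by rewrite Expect_ind // cards1 expr1.
Qed.
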